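(* Let $k\in\mathbb N$, $k\ge1$. Then the polynomial $2^{2(k-1)}(a^{2k}-b^{2k})^2-(a^2-b^2)^{2k}\in\mathbb R[a,b]$ is a sum of squares of polynomials (of degree at most $2k$). *)

(* Defs.v *)
From HB Require Import structures.
From mathcomp Require Import all_boot all_order all_algebra.
From mathcomp Require Import reals.
From mathcomp Require Import mpoly.
Set Implicit Arguments. Unset Strict Implicit. Unset Printing Implicit Defensive.
Import GRing.Theory Num.Theory.
Local Open Scope ring_scope.

Definition Pk (R : realType) (k : nat) : {mpoly R[2]} :=
  (2 ^ (2 * (k - 1)))%:R
    * ('X_(0 : 'I_2) ^+ (2 * k) - 'X_(1 : 'I_2) ^+ (2 * k)) ^+ 2
  - ('X_(0 : 'I_2) ^+ 2 - 'X_(1 : 'I_2) ^+ 2) ^+ (2 * k).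

(* Main.v *)
Require Import Defs.
From HB Require Import structures.
From mathcomp Require Import all_boot all_order all_algebra.
From mathcomp Require Import reals.
From mathcomp Require Import mpoly.
From mathcomp Require Import ring lra zify.
Import GRing.Theory Num.Theory.
Local Open Scope ring_scope.

Lemma bin_le_exp2 n i : ('C(n, i) <= 2 ^ n)%N.
Proof.
elim: n i => [|n IH] [|i] //=; first by rewrite bin0 expn_gt0.
rewrite binS expnS mul2n -addnn; exact: leq_add.
Qed.

Lemma auxH1 (A : comRingType) (a b c d e : A) :
  a * (d * e) - b * d * e * c = (a - b * c) * (d * e).
Proof. ring. Qed.
Lemma auxH2 (A : comRingType) (a b c d e : A) :
  a * (d * e) + b * d * e * c = (a + b * c) * (d * e).
Proof. ring. Qed.
Lemma auxM (A : comRingType) (c w S T : A) :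
  c ^+ 2 * (w * S) ^+ 2 - w ^+ 2 * T ^+ 2 = w ^+ 2 * ((c * S - T) * (c * S + T)).
Proof. ring. Qed.

Lemma auxT (A : comRingType) (a b w x1 x2 y1 y2 : A) :
  w ^+ 2 * (a * (x1 * y1) * (b * (x2 * y2))) = a * b * w ^+ 2 * (x1 * x2) * (y1 * y2).
Proof. ring. Qed.

Section S.
Variable R : realType.
Implicit Types p q : {mpoly R[2]}.

Lemma msizeM_le' p q : (msize (p * q) <= (msize p + msize q).-1)%N.
Proof.
have [->|nz_p] := eqVneq p 0; first by rewrite mul0r msize0.
have [->|nz_q] := eqVneq q 0; first by rewrite mulr0 msize0.
by rewrite msizeM.
Qed.

Lemma msizeXi (i : 'I_2) j : (msize ('X_i ^+ j : {mpoly R[2]}) <= j.+1)%N.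
Proof.
elim: j => [|j IH]; first by rewrite expr0 msize1.
rewrite exprS; apply: leq_trans (msizeM_le' _ _) _.
rewrite msizeX mdeg1 /=. done.
Qed.
Lemma msize_sub p q : (msize (p - q) <= maxn (msize p) (msize q))%N.
Proof. by apply: leq_trans (msizeD_le _ _) _; rewrite msizeN. Qed.

Lemma msizeC_le (c : R) : (msize (c%:MP : {mpoly R[2]}) <= 1)%N.
Proof. by rewrite msizeC; case: (c != 0). Qed.

Definition qq (c : R) (a b : nat) : {mpoly R[2]} :=
  c%:MP * ('X_(0 : 'I_2) ^+ 2 - 'X_(1 : 'I_2) ^+ 2) *
  'X_(0 : 'I_2) ^+ a * 'X_(1 : 'I_2) ^+ b.

Lemma msize_qq c a b : (msize (qq c a b) <= a + b + 3)%N.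
Proof.
rewrite /qq.
set A := c%:MP. set B := _ - _. set Xa := _ ^+ a. set Yb := _ ^+ b.
have h1 := msizeM_le' A B.
have h2 := msizeM_le' (A * B) Xa.
have h5 := msizeM_le' (A * B * Xa) Yb.
have h0 : leq (msize A) 1 by exact: msizeC_le.
have h3 : leq (msize B) 3.
  apply: leq_trans (msize_sub _ _) _.
  by rewrite geq_max !msizeXi.
have h4 : leq (msize Xa) a.+1 by exact: msizeXi.
have h6 : leq (msize Yb) b.+1 by exact: msizeXi.
move: h0 h1 h2 h3 h4 h5 h6.
set m1 := msize A. set m2 := msize B. set m3 := msize Xa. set m4 := msize Yb.
set m5 := msize (A * B). set m6 := msize (A * B * Xa). set m7 := msize (_ * Yb).
lia.
Qed.

Definition al n (i : nat) : R := (2 ^ n)%:R - (-1) ^+ i * ('C(n, i))%:R.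
Definition be n (i : nat) : R := (2 ^ n)%:R + (-1) ^+ i * ('C(n, i))%:R.

Lemma al_ge0 n i : 0 <= al n i.
Proof.
have h : ('C(n, i))%:R <= (2 ^ n)%:R :> R by rewrite ler_nat bin_le_exp2.
rewrite /al -signr_odd; case: (odd i); rewrite /= ?expr1 ?expr0.
all: have h0 : 0 <= ('C(n, i))%:R :> R by exact: ler0n.
all: lra.
Qed.

Lemma be_ge0 n i : 0 <= be n i.
Proof.
have h : ('C(n, i))%:R <= (2 ^ n)%:R :> R by rewrite ler_nat bin_le_exp2.
rewrite /be -signr_odd; case: (odd i); rewrite /= ?expr1 ?expr0.
all: have h0 : 0 <= ('C(n, i))%:R :> R by exact: ler0n.
all: lra.
Qed.

Lemma keyid n :
  let u : {mpoly R[2]} := 'X_(0 : 'I_2) ^+ 2 in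
  let v : {mpoly R[2]} := 'X_(1 : 'I_2) ^+ 2 in
  Pk R n.+1 = (u - v) ^+ 2 *
    ((\sum_(i < n.+1) (al n i)%:MP * (u ^+ (n - i) * v ^+ i)) *
     (\sum_(i < n.+1) (be n i)%:MP * (u ^+ (n - i) * v ^+ i))).
Proof.
move=> u v.
set S := \sum_(i < n.+1) u ^+ (n - i) * v ^+ i.
set T := (u - v) ^+ n.
set c : {mpoly R[2]} := (2 ^ n)%:R.
have H1 : c * S - T = \sum_(i < n.+1) (al n i)%:MP * (u ^+ (n - i) * v ^+ i).
  rewrite /T exprBn /S mulr_sumr -sumrB; apply: eq_bigr => i _.
  rewrite /al mpolyCB mpolyCM !mpolyC_nat rmorphXn rmorphN1 -mulr_natr /c.
exact: auxH1.
have H2 : c * S + T = \sum_(i < n.+1) (be n i)%:MP * (u ^+ (n - i) * v ^+ i).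
  rewrite /T exprBn /S mulr_sumr -big_split; apply: eq_bigr => i _.
  rewrite /be mpolyCD mpolyCM !mpolyC_nat rmorphXn rmorphN1 -mulr_natr /c; exact: auxH2.
rewrite -H1 -H2 /Pk subn1 /=.
have E1 : 'X_(0 : 'I_2) ^+ (2 * n.+1) - 'X_(1 : 'I_2) ^+ (2 * n.+1) = (u - v) * S.
  by rewrite !exprM subrXX.
have E2 : ('X_(0 : 'I_2) ^+ 2 - 'X_(1 : 'I_2) ^+ 2) ^+ (2 * n.+1) = (u - v) ^+ 2 * T ^+ 2.
  by rewrite /T -exprM -exprD; congr (_ ^+ _); lia.
have E3 : (2 ^ (2 * n))%:R = c ^+ 2 :> {mpoly R[2]}.
  by rewrite /c -natrX -expnM mulnC.
rewrite E1 E2 E3; exact: auxM.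
Qed.

Lemma term n (i j : nat) :
  let u : {mpoly R[2]} := 'X_(0 : 'I_2) ^+ 2 in
  let v : {mpoly R[2]} := 'X_(1 : 'I_2) ^+ 2 in
  (u - v) ^+ 2 * ((al n i)%:MP * (u ^+ (n - i) * v ^+ i) *
                  ((be n j)%:MP * (u ^+ (n - j) * v ^+ j)))
  = (qq (Num.sqrt (al n i * be n j)) (n - i + (n - j)) (i + j)) ^+ 2.
Proof.
move=> u v.
have Hs : (Num.sqrt (al n i * be n j))%:MP ^+ 2 = (al n i)%:MP * (be n j)%:MP :> {mpoly R[2]}.
  by rewrite -mpolyCM -rmorphXn sqr_sqrtr // mulr_ge0 ?al_ge0 ?be_ge0.
have EX : forall (l : 'I_2) a b, ('X_l ^+ (a + b)) ^+ 2 = ('X_l ^+ 2) ^+ a * ('X_l ^+ 2) ^+ b :> {mpoly R[2]}.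
  by move=> l a b; rewrite -exprM mulnC exprM exprD.
rewrite /qq [in RHS]exprMn [in RHS]exprMn [in RHS]exprMn Hs !EX.
exact: auxT.
Qed.
End S.

Theorem mainTheorem18 (R : realType) (k : nat) (hk : (1 <= k)%N) :
  exists s : seq {mpoly R[2]},
    (forall q, q \in s -> (msize q <= (2 * k).+1)%N) /\
    Pk R k = \sum_(q <- s) q ^+ 2.
Proof.
case: k hk => // n _.
pose F := fun p : 'I_n.+1 * 'I_n.+1 =>
  @qq R (Num.sqrt (al R n p.1 * be R n p.2)) (n - p.1 + (n - p.2)) (p.1 + p.2).
exists [seq F p | p <- [seq (i1, i2) | i1 <- index_enum 'I_n.+1, i2 <- index_enum 'I_n.+1]].
split.
  move=> q /mapP [[i j] _ ->]; rewrite /F /=.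
  apply: leq_trans (msize_qq _ _ _ _) _.
  have hi := ltn_ord i; have hj := ltn_ord j; lia.
rewrite (keyid R n) big_map big_allpairs big_distrlr mulr_sumr; apply: eq_bigr => i _.
rewrite mulr_sumr; apply: eq_bigr => j _.
exact: term.
Qed.
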